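(* Let $N\ge 1$ and let $A\subset\Gamma=\mathbb N_0^s$ be a monomial degree reducing universal interpolation set of order $N$. Then $A$ contains every lower set $B\subset\Gamma$ with $1\le \#B\le N$, i.e. \[ A\supseteq \bigcup_{j=1}^N\ \bigcup_{B\in L_j(\Gamma)} B . \]
   Context: $\Pi=\mathbb C[x_1,\dots,x_s]$, $\deg$ is total degree with $\deg 0<0$. For $A\subset\Gamma=\mathbb N_0^s$, $\Pi_A$ is the span of the monomials $x^\alpha$, $\alpha\in A$. A subspace $\mathcal P\subseteq\Pi$ is a degree reducing universal interpolation space of order $N$ if for every finite $X\subset\mathbb C^s$ with $\#X\le N$ and every $q\in\Pi$ there is $p\in\mathcal P$ with $p|_X=q|_X$ and $\deg p\le\deg q$. A set $A\subset\Gamma$ is a monomial degree reducing universal interpolation set of order $N$ if $\Pi_A$ is a degree reducing universal interpolation space of order $N$. For $\alpha,\beta\in\Gamma$, $\alpha\le\beta$ means $\alpha_j\le\beta_j$ for all $j$; $B\subset\Gamma$ is a lower set if $\alpha\in B$ and $\beta\le\alpha$ imply $\beta\in B$; $L_j(\Gamma)$ denotes the set of lower sets of cardinality $j$. *)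

(* Defs.v *)
From HB Require Import structures.
From mathcomp Require Import all_boot all_order all_algebra.
From mathcomp Require Import mpoly complex.
From mathcomp Require Import reals.
Set Implicit Arguments. Unset Strict Implicit. Unset Printing Implicit Defensive.
Import Order.TTheory GRing.Theory Num.Theory.
Local Open Scope ring_scope.

Definition in_PiA (s : nat) (K : nzRingType) (A : 'X_{1..s} -> Prop)
  (p : {mpoly K[s]}) : Prop :=
  forall m : 'X_{1..s}, m \in msupp p -> A m.

Definition evalpt (s : nat) (K : comNzRingType) (p : {mpoly K[s]})
  (x : 'rV[K]_s) : K := p.@[fun i => x ord0 i].

(* Degree reducing universal interpolation space of order N, for the
   subspace Pi_A.  deg p <= deg q is expressed with msize (= 1 + total degree,
   and msize 0 = 0), which matches the convention deg 0 < 0. *)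
Definition monomial_DRUI_set (s : nat) (K : comNzRingType)
  (A : 'X_{1..s} -> Prop) (N : nat) : Prop :=
  forall (X : seq 'rV[K]_s), uniq X -> (size X <= N)%N ->
  forall q : {mpoly K[s]},
  exists p : {mpoly K[s]},
    [/\ in_PiA A p,
        (forall x, x \in X -> evalpt p x = evalpt q x) &
        (msize p <= msize q)%N].

Definition mnm_cle (s : nat) (a b : 'X_{1..s}) : Prop :=
  forall i : 'I_s, (a i <= b i)%N.

(* Lower set (B is a finite set given by a duplicate-free sequence). *)
Definition lower_set (s : nat) (B : seq 'X_{1..s}) : Prop :=
  forall a b : 'X_{1..s}, a \in B -> mnm_cle b a -> b \in B.

(* Main.v *)
Require Import Defs.
From HB Require Import structures.
From mathcomp Require Import all_boot all_order all_algebra.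
From mathcomp Require Import mpoly complex.
From mathcomp Require Import reals.
Local Open Scope ring_scope.
Import Order.TTheory GRing.Theory Num.Theory.

Lemma weights1 (F : numFieldType) (n M : nat) : (n <= M)%N ->
  exists c : nat -> F, (forall j, (n < j)%N -> c j = 0) /\
   forall m, (m <= n)%N -> \sum_(j < M.+1) c j * (j%:R)^+m = (m == n)%:R.
Proof.
move=> nM.
pose a : 'rV[F]_n.+1 := \row_(j < n.+1) (j%:R : F).
pose V := Vandermonde n.+1 a.
have uV : V \in unitmx.
  rewrite unitmxE det_Vandermonde unitfE; apply/prodf_neq0 => i _.
  apply/prodf_neq0 => j ij; rewrite !mxE subr_eq0 eq_sym.
  by rewrite eqr_nat neq_ltn ij.
pose e : 'cV[F]_n.+1 := \col_(i < n.+1) ((i == n :> nat)%:R).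
pose cv := invmx V *m e.
exists (fun j => if (j < n.+1)%N then cv (inord j) 0 else 0); split.
  by move=> j nj; rewrite ltnNge nj.
move=> m mn.
rewrite (eq_bigr (fun j : 'I_M.+1 => if (j < n.+1)%N then cv (inord j) 0 * (j%:R)^+m else 0)); last first.
  by move=> j _; case: ifP => // _; rewrite mul0r.
rewrite -big_mkcond /=.
rewrite -(big_ord_widen M.+1 (fun j => cv (inord j) 0 * (j%:R)^+m)) //.
have := congr1 (fun A : 'cV[F]_n.+1 => A (inord m) 0) (mulKVmx uV e).
rewrite /cv !mxE inordK // => <-.
apply: eq_bigr => j _; rewrite !mxE inord_val mulrC; congr (_ * _).
by rewrite inordK.
Qed.

Lemma mnm_eq_of_le (s : nat) (a b : 'X_{1..s}) :
  (forall i, (b i <= a i)%N) -> (mdeg a <= mdeg b)%N -> a = b.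
Proof.
move=> le dg; apply/mnmP => i.
have E : mdeg a = (mdeg b + \sum_i (a i - b i))%N.
  rewrite !mdegE -big_split /=; apply: eq_bigr => j _; by rewrite subnKC.
have : (\sum_i (a i - b i) == 0)%N.
  by move: dg; rewrite E -{2}(addn0 (mdeg b)) leq_add2l leqn0.
rewrite sum_nat_eq0 => /forallP /(_ i) /=; rewrite subn_eq0 => h.
by apply/eqP; rewrite eqn_leq h le.
Qed.

Theorem theorem18 (R : realType) (s N : nat) (A : 'X_{1..s} -> Prop) :
  (1 <= N)%N ->
  monomial_DRUI_set (R[i])%C A N ->
  forall B : seq 'X_{1..s}, uniq B -> (1 <= size B <= N)%N -> lower_set B ->
  forall b : 'X_{1..s}, b \in B -> A b.
Proof.
move=> N1 H B uB /andP[_ szB] lB b bB.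
set C := (R[i])%C.
set M := mdeg b.
have bM : forall i, (b i <= M)%N.
  by move=> i; rewrite /M mdegE (bigD1 i) //= leq_addr.
have [c cP] := fin_all_exists (fun i => @weights1 (R[i])%C _ _ (bM i)).
pose pt (f : {ffun 'I_s -> 'I_M.+1}) : 'rV[C]_s := \row_i (((f i) : nat)%:R).
pose inbox (f : {ffun 'I_s -> 'I_M.+1}) := [forall i, (f i <= b i)%N].
pose Y := [seq f <- enum {ffun 'I_s -> 'I_M.+1} | inbox f].
pose X := map pt Y.
pose w (f : {ffun 'I_s -> 'I_M.+1}) := \prod_i c i (f i).
pose L (p : {mpoly C[s]}) := \sum_f w f * evalpt p (pt f).
have ptI : injective pt.
  move=> f g /rowP fg; apply/ffunP => i; apply/val_inj.
  by have := fg i; rewrite !mxE => /eqP; rewrite eqr_nat => /eqP.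
have uX : uniq X by rewrite map_inj_uniq // filter_uniq // enum_uniq.
have sX : (size X <= N)%N.
  pose mn (f : {ffun 'I_s -> 'I_M.+1}) := [multinom ((f i) : nat) | i < s].
  have mnI : injective mn.
    move=> f g /mnmP fg; apply/ffunP => i; apply/val_inj.
    by have := fg i; rewrite !mnmE.
  apply: leq_trans szB; rewrite size_map -(size_map mn).
  apply: uniq_leq_size; first by rewrite map_inj_uniq // filter_uniq // enum_uniq.
  move=> m /mapP [f]; rewrite mem_filter => /andP[/forallP fb _] ->.
  by apply: (lB b) => // i; rewrite mnmE.
have LX : forall al : 'X_{1..s}, L 'X_[al] = \prod_i \sum_(j < M.+1) c i j * (j%:R)^+ (al i).
  move=> al; rewrite /L bigA_distr_bigA; apply: eq_bigr => f _.
  rewrite /w /evalpt mevalX -big_split /=; apply: eq_bigr => i _; by rewrite mxE.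
have Lsum : forall p : {mpoly C[s]}, L p = \sum_(m <- msupp p) p@_m * L 'X_[m].
  move=> p; rewrite /L (eq_bigr (fun f => \sum_(m <- msupp p) w f * (p@_m * evalpt 'X_[m] (pt f)))); last first.
    move=> f _; rewrite /evalpt {1}(mpolyE p) raddf_sum mulr_sumr; apply: eq_bigr => m _; idtac.
    by congr (_ * _); apply: mevalZ.
  rewrite exchange_big /=; apply: eq_bigr => m _; rewrite mulr_sumr; apply: eq_bigr => f _; by rewrite mulrCA.
have Lmon : forall al : 'X_{1..s}, (mdeg al <= M)%N -> L 'X_[al] = (al == b)%:R.
  move=> al dal; rewrite LX; case: (eqVneq al b) => [->|ne].
    apply: big1 => i _; have [_ h] := cP i; by rewrite h // eqxx.
  have : ~~ [forall i, (b i <= al i)%N].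
    by apply/negP => /forallP h; rewrite (@mnm_eq_of_le _ al b h dal) eqxx in ne.
  rewrite negb_forall => /existsP [k]; rewrite -ltnNge => lt.
  rewrite (bigD1 k) //= (proj2 (cP k)) ?(ltnW lt) // (ltn_eqF lt) mul0r.
  by [].
have [p [pA pX pdeg]] := H X uX sX 'X_[b].
have Lpq : L p = L 'X_[b].
  rewrite /L; apply: eq_bigr => f _; case inf: (inbox f).
    by rewrite pX //; apply: map_f; rewrite mem_filter inf mem_enum.
  have: ~~ inbox f by rewrite inf.
  rewrite negb_forall => /existsP [k]; rewrite -ltnNge => lt.
  by rewrite /w (bigD1 k) //= (proj1 (cP k)) // !mul0r.
apply: pA; apply/negPn/negP => nb.
move: Lpq; rewrite Lmon // eqxx Lsum big1_seq.
  by move/eqP; rewrite eq_sym oner_eq0.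
move=> m /= mp; rewrite Lmon; last first.
  have := msize_mdeg_lt mp; move: pdeg; rewrite msizeX => h1 h2.
  by rewrite -ltnS; apply: leq_trans h2 h1.
have -> : (m == b) = false by apply/negP => /eqP mb; rewrite -mb mp in nb.
by rewrite mulr0.
Qed.
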